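(* Let $X$ be a Banach space with three closed linear subspaces $M,N,L$ such that $M\supsetneq L$. Then for each pair of positive numbers $(a,b)$ with $(a+1)(b+1)<2$, either there exists $u\in M$ with $\|u\|=1$ and $\operatorname{dist}(u,N)>a$, or there exists $v\in N$ with $\|v\|=1$ and $\operatorname{dist}(v,L)>b$. *)

(* Defs.v *)
From HB Require Import structures.
From mathcomp Require Import all_boot all_order all_algebra.
From mathcomp Require Import all_classical all_reals all_analysis.
Set Implicit Arguments. Unset Strict Implicit. Unset Printing Implicit Defensive.
Import Order.TTheory GRing.Theory Num.Theory.
Import numFieldNormedType.Exports.
Local Open Scope classical_set_scope.
Local Open Scope ring_scope.

Definition is_linear_subspace (R : realType) (V : normedModType R) (S : set V) : Prop :=
  S 0 /\ (forall x y, S x -> S y -> S (x + y)) /\ (forall (k : R) x, S x -> S (k *: x)).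

Definition is_closed_subspace (R : realType) (V : normedModType R) (S : set V) : Prop :=
  is_linear_subspace S /\ closed S.

Definition dist_to (R : realType) (V : normedModType R) (x : V) (S : set V) : R :=
  inf [set `|x - y| | y in S].

(* Main.v *)
Require Import Defs.
From HB Require Import structures.
From mathcomp Require Import all_boot all_order all_algebra.
From mathcomp Require Import all_classical all_reals all_analysis.
Import Order.TTheory GRing.Theory Num.Theory.
Import numFieldNormedType.Exports.
Local Open Scope classical_set_scope.
From mathcomp Require Import lra.
Local Open Scope classical_set_scope.
Local Open Scope ring_scope.

Lemma closed_far (R : realType) (X : normedModType R) (L : set X) x :
  closed L -> ~ L x -> exists2 e : R, 0 < e & forall y, L y -> e <= `|x - y|.
Proof.
move=> /closed_openC oL nLx.
have : nbhs x (~` L) by apply: open_nbhs_nbhs; split.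
move=> /nbhs_ballP [e /= e0 he]; exists e => // y Ly.
rewrite leNgt; apply/negP => hy; apply: (he y) => //.
by rewrite -ball_normE /=.
Qed.

Section D.
Variables (R : realType) (X : normedModType R).
Lemma dist_le (S : set X) x y : S y -> dist_to x S <= `|x - y|.
Proof.
move=> Sy; have := @ge_inf R [set `|x - y| | y in S].
apply; first by exists 0 => _ [z _ <-].
by exists y.
Qed.
Lemma dist_lt (S : set X) x t : S !=set0 -> dist_to x S < t ->
  exists2 y, S y & `|x - y| < t.
Proof.
move=> [y Sy] /inf_lt [].
  by exists `|x - y|, y.
by move=> _ [z Sz <-] h; exists z.
Qed.
Lemma dist_ge (S : set X) x e : S !=set0 -> (forall y, S y -> e <= `|x - y|) ->
  e <= dist_to x S.
Proof.
move=> [y Sy] h; apply: lb_le_inf; first by exists `|x - y|, y.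
by move=> _ [z Sz <-]; exact: h.
Qed.
End D.

Lemma normalize_unit (R : realType) (X : normedModType R) (w : X) :
  w != 0 -> `| `|w|^-1 *: w| = 1.
Proof.
move=> w0; have wp : 0 < `|w| by rewrite normr_gt0.
by rewrite normrZ ger0_norm ?invr_ge0 ?ltW // mulVf // gt_eqF.
Qed.

Arguments closed_far {R X L x}.
Arguments dist_le {R X S} x {y}.
Arguments dist_lt {R X S x t}.
Arguments dist_ge {R X S x e}.
Arguments normalize_unit {R X w}.

Theorem lemma2p7 (R : realType) (X : completeNormedModType R)
  (M N L : set X)
  (hM : is_closed_subspace M) (hN : is_closed_subspace N)
  (hL : is_closed_subspace L)
  (hLM : L `<=` M) (hLneM : L <> M)
  (a b : R) (ha : 0 < a) (hb : 0 < b) (hab : (a + 1) * (b + 1) < 2) :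
  (exists u : X, M u /\ `|u| = 1 /\ a < dist_to u N) \/
  (exists v : X, N v /\ `|v| = 1 /\ b < dist_to v L).
Proof.
case: hM => -[M0 [MD MZ]] _; case: hN => -[N0 [ND NZ]] _.
case: hL => -[L0 [LD LZ]] Lc.
have [hA|hA] := pselect (exists u : X, M u /\ `|u| = 1 /\ a < dist_to u N).
  by left.
right; apply: contrapT => hB.
have HA : forall u, M u -> `|u| = 1 -> dist_to u N <= a.
  move=> u Mu u1; rewrite leNgt; apply/negP => h; apply: hA; by exists u.
have HB : forall v, N v -> `|v| = 1 -> dist_to v L <= b.
  move=> v Nv v1; rewrite leNgt; apply/negP => h; apply: hB; by exists v.
have [x Mx nLx] : exists2 x, M x & ~ L x.
  apply: contrapT => h; apply: hLneM; apply/seteqP; split => // y My.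
  by apply: contrapT => nLy; apply: h; exists y.
have [e e0 he] := closed_far Lc nLx.
set d := dist_to x L.
have ed : e <= d by apply: dist_ge => //; exists 0.
have d0 : 0 < d by apply: lt_le_trans ed.
set s := a + b + a * b.
have s1 : s < 1 by rewrite /s; nra.
set δ := (1 - s) / (4 + a + b).
have dE : δ * (4 + a + b) = 1 - s.
  rewrite /δ mulfVK //; apply/lt0r_neq0; lra.
have δ0 : 0 < δ by rewrite /δ divr_gt0 //; lra.
have s0 : 0 < s by rewrite /s; nra.
have δ1 : δ < 1.
  rewrite ltNge; apply/negP => h1.
  have : 1 * (4 + a + b) <= δ * (4 + a + b) by rewrite ler_pM2r //; lra.
  lra.
set K := a + δ + (1 + a + δ) * (b + δ).
have dd : δ * δ < 1 * δ by rewrite ltr_pM2r.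
have K1 : K < 1 by rewrite /K; move: dE; rewrite /s; lra.
have K0 : 0 < K by rewrite /K; nra.
have [l Ll hl] : exists2 l, L l & `|x - l| < d / K.
  apply: dist_lt; first by exists 0.
  by rewrite ltr_pdivlMr //; nra.
set r := `|x - l|.
have r0 : 0 < r by apply: lt_le_trans (he l Ll).
have rK : r * K < d by rewrite -ltr_pdivlMr.
have xl0 : x - l != 0 by rewrite -normr_gt0.
set u := r^-1 *: (x - l).
have Mu : M u.
  apply: (MZ); apply: (MD) => //; rewrite -scaleN1r; apply: (MZ); exact: (hLM).
have u1 : `|u| = 1 by exact: normalize_unit.
have ru : r *: u = x - l by rewrite /u scalerA mulfV ?gt_eqF // scale1r.
have [n Nn hn] : exists2 n, N n & `|u - n| < a + δ.
  apply: dist_lt; first by exists 0.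
  by apply: le_lt_trans (HA u Mu u1) _; lra.
have nle : `|n| <= 1 + a + δ.
  have : `|u - (u - n)| <= `|u| + `|u - n| by apply: ler_normB.
  rewrite opprB addrC subrK u1 => h; apply: le_trans h _; lra.
have [l2 Ll2 hl2] : exists2 l2, L l2 & `|n - l2| <= `|n| * (b + δ).
  have [->|n0] := eqVneq n 0.
    by exists 0 => //; rewrite subr0 normr0 mul0r.
  have np : 0 < `|n| by rewrite normr_gt0.
  set v := `|n|^-1 *: n.
  have [l0 Ll0 h0] : exists2 l0, L l0 & `|v - l0| < b + δ.
    apply: dist_lt; first by exists 0.
    apply: le_lt_trans (HB v (NZ _ _ Nn) (normalize_unit n0)) _; lra.
  exists (`|n| *: l0); first exact: (LZ).
  have -> : n - `|n| *: l0 = `|n| *: (v - l0).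
    by rewrite scalerBr /v scalerA mulfV ?gt_eqF // scale1r.
  rewrite normrZ ger0_norm; last exact: ltW.
  by apply: ler_wpM2l; [exact: ltW | exact: ltW].
have hul : `|u - l2| < K.
  have : `|u - l2| <= `|u - n| + `|n - l2|.
    have -> : u - l2 = (u - n) + (n - l2) by rewrite addrA subrK.
    exact: ler_normD.
  move=> h; apply: le_lt_trans h _.
  have : `|n| * (b + δ) <= (1 + a + δ) * (b + δ) by apply: ler_wpM2r => //; lra.
  rewrite /K; lra.
have Ly : L (l + r *: l2) by apply: (LD) => //; exact: (LZ).
have := dist_le x Ly; rewrite -/d.
have -> : x - (l + r *: l2) = r *: (u - l2).
  by rewrite scalerBr ru opprD addrA.
rewrite normrZ ger0_norm; last exact: ltW.
move=> h.
have hr : r * `|u - l2| < r * K by rewrite ltr_pM2l.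
by have := le_lt_trans h (lt_trans hr rK); rewrite ltxx.
Qed.
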